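(* Let $s\ge1$, $h>0$, $q_0,p_0\in\mathbb{R}^m$, and suppose $u,v:[0,h]\to\mathbb{R}^m$ are polynomials of degree at most $s$ satisfying, for all $c\in[0,1]$, $$u(ch)=q_0+h\sum_{i=0}^{s-1}\Big(\int_0^cP_i(x)\,\mathrm{d}x\Big)\gamma_i(v),\qquad v(ch)=p_0+h\sum_{i=0}^{s-1}\Big(\int_0^cP_i(x)\,\mathrm{d}x\Big)\Big[-\eta_i(u)+\sum_{j=0}^{s-1}\rho_{ij}(u)\gamma_j(v)\Big].$$ Set $q_1=u(h)$, $p_1=v(h)$. Then $H(q_1,p_1)=H(q_0,p_0)$.
   Context: Let $U:\mathbb{R}^m\to\mathbb{R}$ be $C^1$ and $B:\mathbb{R}^m\to\mathbb{R}^{m\times m}$ continuous with $B(q)^\top=-B(q)$ for all $q$. This is a discretization of the problem $\dot q=p$, $\dot p=B(q)p-\nabla U(q)$, $q(0)=q_0$, $p(0)=p_0$ (for charged particle dynamics, $m=3$ and $B(q)p=p\times L(q)$ with $L$ the magnetic field and $-\nabla U$ the electric field), whose energy is $H(q,p)=\frac12p^\top p+U(q)$. $\{P_j\}_{j\ge0}$ is the orthonormal Legendre basis on $[0,1]$ ($\deg P_j=j$, $\int_0^1P_iP_j=\delta_{ij}$), and for a path $\sigma:[0,h]\to\mathbb{R}^m$: $\gamma_j(\sigma)=\int_0^1P_j(\tau)\sigma(\tau h)\mathrm{d}\tau$, $\eta_j(\sigma)=\int_0^1P_j(\tau)\nabla U(\sigma(\tau h))\mathrm{d}\tau$, $\rho_{ij}(\sigma)=\int_0^1P_i(\tau)P_j(\tau)B(\sigma(\tau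 h))\mathrm{d}\tau$. *)

(* Defs.v *)
From Stdlib Require Import Reals Lra ClassicalEpsilon.
Open Scope R_scope.

(* Vectors of R^m are modelled as functions nat -> R; only the components
   0 .. m-1 are meaningful.  Functions "on R^m" are required to depend only
   on these components (see [on_Rm]). *)
Definition vec := nat -> R.

Fixpoint rsum (n : nat) (f : nat -> R) : R :=
  match n with
  | O => 0
  | S n' => rsum n' f + f n'
  end.

Definition on_Rm {A : Type} (m : nat) (F : vec -> A) : Prop :=
  forall q q' : vec, (forall i, (i < m)%nat -> q i = q' i) -> F q = F q'.

Definition cont_Rm (m : nat) (F : vec -> R) : Prop :=
  forall (q : vec) (eps : R), 0 < eps ->
    exists del, 0 < del /\
      forall q' : vec, (forall i, (i < m)%nat -> Rabs (q' i - q i) < del) ->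
        Rabs (F q' - F q) < eps.

Definition vset (q : vec) (i : nat) (t : R) : vec :=
  fun k => if Nat.eqb k i then t else q k.

Definition is_gradient (m : nat) (U : vec -> R) (G : vec -> vec) : Prop :=
  forall (q : vec) (i : nat), (i < m)%nat ->
    derivable_pt_lim (fun t => U (vset q i t)) (q i) (G q i).

Definition C1_grad (m : nat) (U : vec -> R) (G : vec -> vec) : Prop :=
  on_Rm m U /\ is_gradient m U G /\
  forall i, (i < m)%nat -> cont_Rm m (fun q => G q i).

Definition cont_skew (m : nat) (B : vec -> nat -> nat -> R) : Prop :=
  on_Rm m B /\
  (forall i j, (i < m)%nat -> (j < m)%nat -> cont_Rm m (fun q => B q i j)) /\
  (forall q i j, (i < m)%nat -> (j < m)%nat -> B q i j = - B q j i).

(* Riemann integral of f over [a,b] (value chosen by epsilon; it is the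
   Riemann integral whenever f is Riemann integrable, which is the case for
   every integrand below since they are continuous). *)
Definition integral (f : R -> R) (a b : R) : R :=
  epsilon (inhabits 0)
    (fun I => exists pr : Riemann_integrable f a b, RiemannInt pr = I).

(* Orthonormal (shifted) Legendre polynomials on [0,1]:
   P_j(x) = sqrt(2j+1) * sum_{k=0}^{j} (-1)^(j+k) C(j,k) C(j+k,k) x^k,
   deg P_j = j, int_0^1 P_i P_j = delta_ij, P_j(1) > 0. *)
Definition legendre (j : nat) (x : R) : R :=
  sqrt (INR (2 * j + 1)) *
  rsum (S j) (fun k => (-1) ^ (j + k) * Binomial.C j k * Binomial.C (j + k) k * x ^ k).

Definition poly_le (s : nat) (h : R) (u : R -> vec) : Prop :=
  exists a : nat -> vec, forall t, 0 <= t <= h -> forall k,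
    u t k = rsum (S s) (fun n => a n k * t ^ n).

Definition gam (h : R) (sigma : R -> vec) (j k : nat) : R :=
  integral (fun tau => legendre j tau * sigma (tau * h) k) 0 1.

Definition eta (G : vec -> vec) (h : R) (sigma : R -> vec) (j k : nat) : R :=
  integral (fun tau => legendre j tau * G (sigma (tau * h)) k) 0 1.

Definition rho (B : vec -> nat -> nat -> R) (h : R) (sigma : R -> vec)
  (i j k l : nat) : R :=
  integral (fun tau => legendre i tau * legendre j tau * B (sigma (tau * h)) k l) 0 1.

Definition energy (m : nat) (U : vec -> R) (q p : vec) : R :=
  / 2 * rsum m (fun k => p k * p k) + U q.

(* Main.v *)
Require Import Defs.
From Stdlib Require Import Reals Lra Lia ClassicalEpsilon FunctionalExtensionality.
From Coquelicot Require Import Coquelicot.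
Open Scope R_scope.

Lemma rsum_ext n f g : (forall i, (i < n)%nat -> f i = g i) -> rsum n f = rsum n g.
Proof. induction n; simpl; intros H; auto. rewrite IHn by (intros; apply H; lia). rewrite H by lia. auto. Qed.

Lemma rsum_plus n f g : rsum n (fun i => f i + g i) = rsum n f + rsum n g.
Proof. induction n; simpl; [ring|rewrite IHn; ring]. Qed.

Lemma rsum_mult_l n a f : a * rsum n f = rsum n (fun i => a * f i).
Proof. induction n; simpl; [ring|rewrite <- IHn; ring]. Qed.

Lemma rsum_zero n : rsum n (fun _ => 0) = 0.
Proof. induction n; simpl; [ring|rewrite IHn; ring]. Qed.

Lemma rsum_opp n f : rsum n (fun i => - f i) = - rsum n f.
Proof. induction n; simpl; [ring|rewrite IHn; ring]. Qed.

Lemma rsum_tele n f : rsum n (fun k => f (S k) - f k) = f n - f O.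
Proof. induction n; simpl; [ring|rewrite IHn; ring]. Qed.

Lemma rsum_swap n p f : rsum n (fun a => rsum p (fun b => f a b)) = rsum p (fun b => rsum n (fun a => f a b)).
Proof. induction n; simpl. now rewrite rsum_zero. rewrite IHn, <- rsum_plus. auto. Qed.

Lemma dpl_plus f g x a b : derivable_pt_lim f x a -> derivable_pt_lim g x b ->
  derivable_pt_lim (fun y => f y + g y) x (a + b).
Proof. intros. exact (derivable_pt_lim_plus _ _ _ _ _ H H0). Qed.
Lemma dpl_mult f g x a b : derivable_pt_lim f x a -> derivable_pt_lim g x b ->
  derivable_pt_lim (fun y => f y * g y) x (a * g x + f x * b).
Proof. intros. exact (derivable_pt_lim_mult _ _ _ _ _ H H0). Qed.
Lemma dpl_const c x : derivable_pt_lim (fun _ => c) x 0.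
Proof. exact (derivable_pt_lim_const c x). Qed.
Lemma dpl_eq f x a b : derivable_pt_lim f x a -> a = b -> derivable_pt_lim f x b.
Proof. intros; subst; auto. Qed.
Lemma dpl_cont f x a : derivable_pt_lim f x a -> continuity_pt f x.
Proof. intros H. apply derivable_continuous_pt. exists a. exact H. Qed.

Lemma dpl_rsum n (f : nat -> R -> R) df x :
  (forall i, (i < n)%nat -> derivable_pt_lim (f i) x (df i)) ->
  derivable_pt_lim (fun y => rsum n (fun i => f i y)) x (rsum n df).
Proof.
  induction n; intros H; simpl. apply dpl_const.
  apply dpl_plus. apply IHn; intros; apply H; lia. apply H; lia.
Qed.

Lemma cp_plus f g x : continuity_pt f x -> continuity_pt g x -> continuity_pt (fun y => f y + g y) x.
Proof. intros. exact (continuity_pt_plus _ _ _ H H0). Qed.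
Lemma cp_mult f g x : continuity_pt f x -> continuity_pt g x -> continuity_pt (fun y => f y * g y) x.
Proof. intros. exact (continuity_pt_mult _ _ _ H H0). Qed.
Lemma cp_const c x : continuity_pt (fun _ => c) x.
Proof. apply continuity_pt_const. intros a b; auto. Qed.
Lemma cp_rsum n (f : nat -> R -> R) x :
  (forall i, (i < n)%nat -> continuity_pt (f i) x) ->
  continuity_pt (fun y => rsum n (fun i => f i y)) x.
Proof.
  induction n; intros H; simpl. apply cp_const.
  apply cp_plus. apply IHn; intros; apply H; lia. apply H; lia.
Qed.

Lemma leg_cont j x : continuity_pt (legendre j) x.
Proof.
  unfold legendre. apply cp_mult. apply cp_const.
  apply cp_rsum. intros i _. apply cp_mult. apply cp_const.
  eapply dpl_cont. apply derivable_pt_lim_pow.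
Qed.

Lemma cp_to_c f x : continuity_pt f x -> continuous f x.
Proof. intros H. apply continuity_pt_filterlim. exact H. Qed.

Lemma exRInt_of_cont f a b : (forall x, continuity_pt f x) -> ex_RInt f a b.
Proof. intros H. apply (ex_RInt_continuous (V:=R_CompleteNormedModule)). intros; apply cp_to_c; auto. Qed.

Lemma integral_RInt f a b : ex_RInt f a b -> integral f a b = RInt f a b.
Proof.
  intros H. pose proof (ex_RInt_Reals_0 _ _ _ H) as pr.
  unfold integral.
  assert (E: exists I, exists pr0 : Riemann_integrable f a b, RiemannInt pr0 = I).
  { exists (RiemannInt pr). exists pr. auto. }
  destruct (epsilon_spec (inhabits 0) _ E) as [pr1 Hp]. rewrite <- Hp.
  symmetry. apply RInt_Reals.
Qed.

Lemma L_deriv i x : derivable_pt_lim (fun c => RInt (legendre i) 0 c) x (legendre i x).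
Proof.
  apply is_derive_Reals. apply (is_derive_RInt (V:=R_NormedModule) (legendre i) (fun c => RInt (legendre i) 0 c) 0).
  apply filter_forall. intros y. apply (RInt_correct (V:=R_CompleteNormedModule)). apply exRInt_of_cont. apply leg_cont.
  apply cp_to_c. apply leg_cont.
Qed.

Lemma cont_on m F : cont_Rm m F -> on_Rm m F.
Proof.
  intros H q q' E. destruct (Req_dec (F q) (F q')) as [e|ne]; auto.
  exfalso. assert (0 < Rabs (F q' - F q)) by (apply Rabs_pos_lt; intro; apply ne; lra).
  destruct (H q _ H0) as [d [dp Hd]].
  specialize (Hd q'). assert (Rabs (F q' - F q) < Rabs (F q' - F q)); [|lra].
  apply Hd. intros i Hi. rewrite E by auto. rewrite Rminus_diag, Rabs_R0. auto.
Qed.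

Lemma unif_fin n (Q : R -> vec) x : (forall i, (i<n)%nat -> continuity_pt (fun c => Q c i) x) ->
  forall del, 0<del -> exists alp, 0<alp /\ forall y, Rabs (y - x) < alp ->
   forall i, (i<n)%nat -> Rabs (Q y i - Q x i) < del.
Proof.
  induction n; intros H del Hd.
  - exists 1. split. lra. intros; lia.
  - assert (Hn : forall i, (i<n)%nat -> continuity_pt (fun c => Q c i) x) by (intros; apply H; lia).
    destruct (IHn Hn del Hd) as [a1 [a1p H1]].
    pose proof (H n ltac:(lia)) as Hc. unfold continuity_pt, continue_in, limit1_in, limit_in in Hc.
    destruct (Hc del Hd) as [a2 [a2p H2]]. simpl in H2. unfold R_dist in H2.
    exists (Rmin a1 a2). split. apply Rmin_pos; lra.
    intros y Hy i Hi. destruct (Nat.eq_dec i n).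
    + subst. destruct (Req_dec y x). subst. rewrite Rminus_diag, Rabs_R0; auto.
      apply H2. split. split. exact I. auto. pose proof (Rmin_r a1 a2). lra.
    + apply H1. pose proof (Rmin_l a1 a2). lra. lia.
Qed.

Lemma compcont m F (Q : R -> vec) x : cont_Rm m F ->
  (forall k, (k<m)%nat -> continuity_pt (fun c => Q c k) x) -> continuity_pt (fun c => F (Q c)) x.
Proof.
  intros HF HQ. unfold continuity_pt, continue_in, limit1_in, limit_in. simpl. unfold R_dist.
  intros eps He. destruct (HF (Q x) eps He) as [d [dp Hd]].
  destruct (unif_fin m Q x HQ d dp) as [a [ap Ha]]. exists a. split. lra.
  intros y [_ Hy]. apply Hd. intros; apply Ha; auto.
Qed.

Lemma limit_ext f g D l x0 : (forall y, D y -> f y = g y) -> limit1_in f D l x0 -> limit1_in g D l x0.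
Proof.
  unfold limit1_in, limit_in. intros E H eps He. destruct (H eps He) as [a [ap Ha]].
  exists a. split; auto. intros y [Dy Hy]. rewrite <- E by auto. apply Ha; auto.
Qed.

Lemma limit_rsum n (f : nat -> R -> R) l D x0 :
  (forall k, (k<n)%nat -> limit1_in (f k) D (l k) x0) ->
  limit1_in (fun y => rsum n (fun k => f k y)) D (rsum n l) x0.
Proof.
  induction n; intros H; simpl.
  - unfold limit1_in, limit_in. intros eps He. exists 1. split. lra. intros. simpl. unfold R_dist.
    rewrite Rminus_diag, Rabs_R0; lra.
  - apply limit_plus. apply IHn; intros; apply H; lia. apply H; lia.
Qed.

Lemma vset_vset q i a b : vset (vset q i a) i b = vset q i b.
Proof. apply functional_extensionality; intro k. unfold vset. destruct (Nat.eqb k i); auto. Qed.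
Lemma vset_at q i a : vset q i a i = a.
Proof. unfold vset. rewrite Nat.eqb_refl. auto. Qed.

Lemma grad_line m U G y k c : is_gradient m U G -> (k < m)%nat ->
  derivable_pt_lim (fun t => U (vset y k t)) c (G (vset y k c) k).
Proof.
  intros HG Hk. pose proof (HG (vset y k c) k Hk) as H. rewrite vset_at in H.
  eapply derivable_pt_lim_ext in H. exact H. intros t; simpl. rewrite vset_vset. auto.
Qed.

Lemma mvt_line m U G y k a b : is_gradient m U G -> (k < m)%nat ->
  exists xi, U (vset y k b) - U (vset y k a) = G (vset y k xi) k * (b - a) /\ Rabs (xi - a) <= Rabs (b - a).
Proof.
  intros HG Hk. destruct (Rtotal_order a b) as [lt|[eq|gt]].
  - destruct (MVT_cor2 (fun t => U (vset y k t)) (fun t => G (vset y k t) k) a b lt) as [c [Hc Hb]].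
    intros; apply (grad_line m); auto. exists c. split; auto.
    rewrite !Rabs_right by lra. lra.
  - subst. exists b. split. ring. rewrite Rminus_diag, Rabs_R0. lra.
  - destruct (MVT_cor2 (fun t => U (vset y k t)) (fun t => G (vset y k t) k) b a gt) as [c [Hc Hb]].
    intros; apply (grad_line m); auto. exists c. split. lra.
    rewrite !Rabs_left by lra. lra.
Qed.

Lemma chain m U G (Q : R -> vec) dQ x : C1_grad m U G ->
 (forall k, (k<m)%nat -> derivable_pt_lim (fun c => Q c k) x (dQ k)) ->
 derivable_pt_lim (fun c => U (Q c)) x (rsum m (fun k => G (Q x) k * dQ k)).
Proof.
  intros [HU [HG HGc]] HQ.
  set (Y := fun k hh => (fun i => if Nat.ltb i k then Q (x+hh) i else Q x i) : vec).
  assert (Hstep: forall k hh, (k<m)%nat -> exists xi, U (Y (S k) hh) - U (Y k hh) =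
     G (vset (Y k hh) k xi) k * (Q (x+hh) k - Q x k) /\ Rabs (xi - Q x k) <= Rabs (Q (x+hh) k - Q x k)).
  { intros k hh Hk. destruct (mvt_line m U G (Y k hh) k (Q x k) (Q (x+hh) k) HG Hk) as [xi [E Bd]].
    exists xi. split; auto.
    assert (eq1 : Y (S k) hh = vset (Y k hh) k (Q (x+hh) k)).
    { apply functional_extensionality; intro i. unfold vset, Y.
      destruct (Nat.eqb_spec i k) as [->|ne].
      - destruct (Nat.ltb_spec k (S k)); auto; lia.
      - destruct (Nat.ltb_spec i (S k)), (Nat.ltb_spec i k); auto; lia. }
    assert (eq2 : Y k hh = vset (Y k hh) k (Q x k)).
    { apply functional_extensionality; intro i. unfold vset, Y.
      destruct (Nat.eqb_spec i k) as [->|ne]; auto.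
      destruct (Nat.ltb_spec k k); auto; lia. }
    rewrite eq1, <- E. rewrite <- eq2. reflexivity. }
  assert (Hc : forall i, (i<m)%nat -> continuity_pt (fun c => Q c i) x).
  { intros; eapply dpl_cont; apply HQ; auto. }
  assert (Hlim : limit1_in (fun hh => rsum m (fun k => (U (Y (S k) hh) - U (Y k hh)) / hh))
     (fun hh => hh <> 0) (rsum m (fun k => G (Q x) k * dQ k)) 0).
  { apply limit_rsum. intros k Hk.
    set (xi := fun hh => proj1_sig (constructive_indefinite_description _ (Hstep k hh Hk))).
    assert (P : forall hh, U (Y (S k) hh) - U (Y k hh) =
     G (vset (Y k hh) k (xi hh)) k * (Q (x+hh) k - Q x k) /\ Rabs (xi hh - Q x k) <= Rabs (Q (x+hh) k - Q x k)).
    { intros hh. unfold xi. destruct (constructive_indefinite_description _ _); simpl; auto. }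
    apply limit_ext with (f := fun hh => G (vset (Y k hh) k (xi hh)) k * ((Q (x+hh) k - Q x k)/hh)).
    { intros hh _. rewrite (proj1 (P hh)). unfold Rdiv. ring. }
    apply limit_mul.
    - unfold limit1_in, limit_in; simpl; unfold R_dist. intros eps He.
      destruct (HGc k Hk (Q x) eps He) as [d [dp Hd]].
      destruct (unif_fin m Q x Hc d dp) as [a [ap Ha]]. exists a; split; [lra|].
      intros hh [_ Hh]. apply Hd. intros i Hi. rewrite Rminus_0_r in Hh.
      assert (Ha' : Rabs (Q (x+hh) i - Q x i) < d).
      { apply Ha; auto. replace (x+hh-x) with hh by ring. auto. }
      unfold vset. destruct (Nat.eqb_spec i k) as [->|ne].
      + eapply Rle_lt_trans. apply (proj2 (P hh)). auto.
      + unfold Y. destruct (Nat.ltb i k); auto. rewrite Rminus_diag, Rabs_R0. auto.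
    - unfold limit1_in, limit_in; simpl; unfold R_dist. intros eps He.
      destruct (HQ k Hk eps He) as [d Hd]. exists d. split. apply cond_pos.
      intros hh [Dh Hh]. rewrite Rminus_0_r in Hh. apply Hd; auto. }
  intros eps He. destruct (Hlim eps He) as [a [ap Ha]]. exists (mkposreal a ap).
  intros hh Hh0 Hha. simpl in Hha.
  replace ((U (Q (x+hh)) - U (Q x))/hh) with (rsum m (fun k => (U (Y (S k) hh) - U (Y k hh)) / hh)).
  - specialize (Ha hh). simpl in Ha. unfold R_dist in Ha. apply Ha. split; auto. rewrite Rminus_0_r; auto.
  - unfold Rdiv.
    transitivity (/hh * rsum m (fun k => U (Y (S k) hh) - U (Y k hh))).
    + rewrite rsum_mult_l. apply rsum_ext. intros; ring.
    + rewrite (rsum_tele m (fun k => U (Y k hh))).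
      assert (E1 : U (Y m hh) = U (Q (x+hh))).
      { apply HU. intros i Hi. unfold Y. destruct (Nat.ltb_spec i m); auto; lia. }
      assert (E2 : U (Y O hh) = U (Q x)).
      { apply HU. intros i Hi. unfold Y. destruct (Nat.ltb_spec i 0); auto; lia. }
      rewrite E1, E2. ring.
Qed.

Lemma quad_anti m s (T : nat -> nat -> nat -> nat -> R) :
  (forall k i j l, (k<m)%nat -> (i<s)%nat -> (j<s)%nat -> (l<m)%nat -> T l j i k = - T k i j l) ->
  rsum m (fun k => rsum s (fun i => rsum s (fun j => rsum m (fun l => T k i j l)))) = 0.
Proof.
  intros HT.
  set (S := rsum m (fun k => rsum s (fun i => rsum s (fun j => rsum m (fun l => T k i j l))))).
  assert (E : S = rsum m (fun l => rsum s (fun j => rsum s (fun i => rsum m (fun k => T k i j l))))).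
  { unfold S.
    transitivity (rsum m (fun k => rsum s (fun i => rsum m (fun l => rsum s (fun j => T k i j l))))).
    { apply rsum_ext; intros; apply rsum_ext; intros. exact (rsum_swap _ _ (fun j l => T i i0 j l)). }
    transitivity (rsum m (fun k => rsum m (fun l => rsum s (fun i => rsum s (fun j => T k i j l))))).
    { apply rsum_ext; intros. exact (rsum_swap _ _ (fun i0 l => rsum s (fun j => T i i0 j l))). }
    transitivity (rsum m (fun k => rsum m (fun l => rsum s (fun j => rsum s (fun i => T k i j l))))).
    { apply rsum_ext; intros; apply rsum_ext; intros. exact (rsum_swap _ _ (fun i1 j => T i i1 j i0)). }
    transitivity (rsum m (fun l => rsum m (fun k => rsum s (fun j => rsum s (fun i => T k i j l))))).
    { exact (rsum_swap _ _ (fun k l => rsum s (fun j => rsum s (fun i => T k i j l)))). }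
    transitivity (rsum m (fun l => rsum s (fun j => rsum m (fun k => rsum s (fun i => T k i j l))))).
    { apply rsum_ext; intros. exact (rsum_swap _ _ (fun k j => rsum s (fun i1 => T k i1 j i))). }
    apply rsum_ext; intros; apply rsum_ext; intros. exact (rsum_swap _ _ (fun k i1 => T k i1 i0 i)). }
  assert (E2 : rsum m (fun l => rsum s (fun j => rsum s (fun i => rsum m (fun k => T k i j l)))) = - S).
  { unfold S. rewrite <- rsum_opp. apply rsum_ext; intros. rewrite <- rsum_opp. apply rsum_ext; intros.
    rewrite <- rsum_opp. apply rsum_ext; intros. rewrite <- rsum_opp. apply rsum_ext; intros.
    apply HT; auto. }
  fold S. lra.
Qed.

Definition CE (f : R -> R) := forall x, continuity_pt f x.

Lemma CE_ex f a b : CE f -> ex_RInt f a b.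
Proof. intros; apply exRInt_of_cont; auto. Qed.

Lemma CE_rsum n (f : nat -> R -> R) : (forall i, (i<n)%nat -> CE (f i)) -> CE (fun x => rsum n (fun i => f i x)).
Proof. intros H x. apply cp_rsum. intros; apply H; auto. Qed.

Lemma RInt_scal_R f a b c : CE f -> RInt (fun x => c * f x) a b = c * RInt f a b.
Proof. intros H. exact (RInt_scal (V:=R_CompleteNormedModule) f a b c (CE_ex f a b H)). Qed.

Lemma RInt_lin a b f g c d : CE f -> CE g ->
  RInt (fun x => c * f x + d * g x) a b = c * RInt f a b + d * RInt g a b.
Proof.
  intros Hf Hg.
  rewrite (RInt_plus (V:=R_CompleteNormedModule) (fun x => c * f x) (fun x => d * g x)).
  - change (plus (RInt (fun x : R => c * f x) a b) (RInt (fun x : R => d * g x) a b) = c * RInt f a b + d * RInt g a b).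
    rewrite RInt_scal_R, RInt_scal_R by auto. reflexivity.
  - apply CE_ex. intro; apply cp_mult; auto. apply cp_const.
  - apply CE_ex. intro; apply cp_mult; auto. apply cp_const.
Qed.

Lemma RInt_rsum n (f : nat -> R -> R) a b : (forall i, (i<n)%nat -> CE (f i)) ->
  RInt (fun x => rsum n (fun i => f i x)) a b = rsum n (fun i => RInt (f i) a b).
Proof.
  induction n; intros H; simpl.
  - rewrite RInt_const. unfold scal; simpl. unfold mult; simpl. ring.
  - rewrite (RInt_plus (V:=R_CompleteNormedModule) (fun x => rsum n (fun i => f i x)) (f n)).
    + rewrite IHn by (intros; apply H; lia). reflexivity.
    + apply CE_ex. apply CE_rsum. intros; apply H; lia.
    + apply CE_ex. apply H; lia.
Qed.

Lemma dlin a hh (cf : nat -> R) n x :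
  derivable_pt_lim (fun c => a + hh * rsum n (fun i => RInt (legendre i) 0 c * cf i)) x
    (hh * rsum n (fun i => legendre i x * cf i)).
Proof.
  eapply dpl_eq. apply dpl_plus. apply dpl_const. apply dpl_mult. apply dpl_const.
  apply dpl_rsum. intros i _. apply dpl_mult. apply L_deriv. apply dpl_const.
  rewrite (rsum_ext n _ (fun i => legendre i x * cf i)) by (intros; ring). ring.
Qed.

Lemma CE_lin hh (cf : nat -> R) n : CE (fun x => hh * rsum n (fun i => legendre i x * cf i)).
Proof.
  intros x. apply cp_mult. apply cp_const. apply cp_rsum. intros. apply cp_mult. apply leg_cont. apply cp_const.
Qed.

Lemma integral_eq f F : CE F -> (forall x, 0 < x < 1 -> f x = F x) -> integral f 0 1 = RInt F 0 1.
Proof.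
  intros HF E.
  assert (ex_RInt f 0 1).
  { apply (ex_RInt_ext (V:=R_NormedModule) F). rewrite Rmin_left, Rmax_right by lra.
    intros; symmetry; auto. apply CE_ex; auto. }
  rewrite integral_RInt by auto. apply RInt_ext. rewrite Rmin_left, Rmax_right by lra. auto.
Qed.

Theorem theorem1 (m s : nat) (h : R) (U : vec -> R) (G : vec -> vec)
  (B : vec -> nat -> nat -> R) (q0 p0 : vec) (u v : R -> vec) :
  (1 <= s)%nat -> 0 < h ->
  C1_grad m U G -> cont_skew m B ->
  poly_le s h u -> poly_le s h v ->
  (forall c, 0 <= c <= 1 -> forall k, (k < m)%nat ->
     u (c * h) k = q0 k + h * rsum s (fun i =>
        integral (legendre i) 0 c * gam h v i k)) ->
  (forall c, 0 <= c <= 1 -> forall k, (k < m)%nat ->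
     v (c * h) k = p0 k + h * rsum s (fun i =>
        integral (legendre i) 0 c *
        (- eta G h u i k +
         rsum s (fun j => rsum m (fun l => rho B h u i j k l * gam h v j l))))) ->
  energy m U (u h) (v h) = energy m U q0 p0.
Proof.
  intros Hs Hh HC1 [HBon [HBc HBsk]] _ _ Hu Hv.
  pose proof HC1 as [HU [HG HGc]].
  pose (g := fun i k => gam h v i k).
  pose (w := fun i k => - eta G h u i k + rsum s (fun j => rsum m (fun l => rho B h u i j k l * g j l))).
  pose (Qt := fun c => (fun k => q0 k + h * rsum s (fun i => RInt (legendre i) 0 c * g i k)) : vec).
  pose (Vt := fun c => (fun k => p0 k + h * rsum s (fun i => RInt (legendre i) 0 c * w i k)) : vec).
  pose (dQ := fun c k => h * rsum s (fun i => legendre i c * g i k)).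
  pose (dV := fun c k => h * rsum s (fun i => legendre i c * w i k)).
  assert (HL : forall i c, integral (legendre i) 0 c = RInt (legendre i) 0 c).
  { intros. apply integral_RInt. apply exRInt_of_cont. apply leg_cont. }
  assert (HuQ : forall c, 0 <= c <= 1 -> forall k, (k<m)%nat -> u (c*h) k = Qt c k).
  { intros. rewrite Hu by auto. unfold Qt. f_equal. f_equal. apply rsum_ext. intros. rewrite HL. reflexivity. }
  assert (HvV : forall c, 0 <= c <= 1 -> forall k, (k<m)%nat -> v (c*h) k = Vt c k).
  { intros. rewrite Hv by auto. unfold Vt. f_equal. f_equal. apply rsum_ext. intros. rewrite HL. reflexivity. }
  assert (dQt : forall k x, derivable_pt_lim (fun c => Qt c k) x (dQ x k)).
  { intros. apply (dlin (q0 k) h (fun i => g i k)). }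
  assert (dVt : forall k x, derivable_pt_lim (fun c => Vt c k) x (dV x k)).
  { intros. apply (dlin (p0 k) h (fun i => w i k)). }
  assert (cQ : forall k, CE (fun c => Qt c k)). { intros k x. eapply dpl_cont. apply dQt. }
  assert (cV : forall k, CE (fun c => Vt c k)). { intros k x. eapply dpl_cont. apply dVt. }
  assert (cdQ : forall k, CE (fun c => dQ c k)). { intros k. apply (CE_lin h (fun i => g i k)). }
  assert (cdV : forall k, CE (fun c => dV c k)). { intros k. apply (CE_lin h (fun i => w i k)). }
  assert (cGQ : forall k, (k<m)%nat -> CE (fun c => G (Qt c) k)).
  { intros k Hk x. apply (compcont m (fun q => G q k)). apply HGc; auto. intros; apply cQ. }
  pose (E := fun c => / 2 * rsum m (fun k => Vt c k * Vt c k) + U (Qt c)).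
  pose (E' := fun c => rsum m (fun k => Vt c k * dV c k) + rsum m (fun k => G (Qt c) k * dQ c k)).
  assert (dE : forall x, derivable_pt_lim E x (E' x)).
  { intros x. unfold E. eapply dpl_eq. apply dpl_plus. apply dpl_mult. apply dpl_const.
    apply dpl_rsum. intros k _. apply dpl_mult; apply dVt.
    apply (chain m U G Qt (dQ x) x HC1). intros; apply dQt.
    unfold E'. rewrite (rsum_ext m (fun k => dV x k * Vt x k + Vt x k * dV x k) (fun k => 2 * (Vt x k * dV x k))) by (intros; ring).
    rewrite <- rsum_mult_l. field. }
  assert (cE' : CE E').
  { intros x. unfold E'. apply cp_plus; apply cp_rsum; intros k Hk; apply cp_mult.
    apply cV. apply cdV. apply cGQ; auto. apply cdQ. }
  assert (FTC : RInt E' 0 1 = E 1 - E 0).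
  { apply is_RInt_unique. apply (is_RInt_derive (V:=R_CompleteNormedModule) E E').
    intros; apply is_derive_Reals; auto. intros; apply cp_to_c; auto. }
  assert (Ig : forall i k, (k<m)%nat -> g i k = RInt (fun x => legendre i x * Vt x k) 0 1).
  { intros i k Hk. unfold g, gam. apply integral_eq.
    intro x; apply cp_mult; [apply leg_cont|apply cV].
    intros x Hx. rewrite HvV by (auto; lra). reflexivity. }
  assert (Ieta : forall i k, (k<m)%nat -> eta G h u i k = RInt (fun x => legendre i x * G (Qt x) k) 0 1).
  { intros i k Hk. unfold eta. apply integral_eq.
    intro x; apply cp_mult; [apply leg_cont|apply cGQ; auto].
    intros x Hx. f_equal. apply (cont_on m (fun q => G q k)). apply HGc; auto.
    intros; apply HuQ; auto; lra. }
  assert (Irho : forall i j k l, (k<m)%nat -> (l<m)%nat -> rho B h u i j k l =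
      RInt (fun x => legendre i x * legendre j x * B (Qt x) k l) 0 1).
  { intros i j k l Hk Hl. unfold rho. apply integral_eq.
    intro x; apply cp_mult; [apply cp_mult; apply leg_cont|].
    apply (compcont m (fun q => B q k l)). apply HBc; auto. intros; apply cQ.
    intros x Hx. f_equal. assert (B (u (x*h)) = B (Qt x)) as ->; auto.
    apply HBon. intros; apply HuQ; auto; lra. }
  assert (skew : forall i j k l, (k<m)%nat -> (l<m)%nat -> rho B h u j i l k = - rho B h u i j k l).
  { intros i j k l Hk Hl. rewrite !Irho by auto.
    rewrite (RInt_ext (V:=R_CompleteNormedModule) _ (fun x => -1 * (legendre i x * legendre j x * B (Qt x) k l))).
    rewrite RInt_scal_R. ring.
    intro x; apply cp_mult; [apply cp_mult; apply leg_cont|].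
    apply (compcont m (fun q => B q k l)). apply HBc; auto. intros; apply cQ.
    intros. rewrite HBsk by auto. match goal with |- ?a = ?b => change (a = b :> R) end. ring. }
  assert (Z : RInt E' 0 1 = 0).
  { rewrite (RInt_ext (V:=R_CompleteNormedModule) _ (fun x => rsum m (fun k => rsum s (fun i =>
       (h * w i k) * (legendre i x * Vt x k) + (h * g i k) * (legendre i x * G (Qt x) k))))).
    2: { intros x _. unfold E'. rewrite <- rsum_plus. apply rsum_ext. intros k Hk.
         rewrite rsum_plus. f_equal.
         - unfold dV. rewrite rsum_mult_l, rsum_mult_l. apply rsum_ext; intros; ring.
         - unfold dQ. rewrite rsum_mult_l, rsum_mult_l. apply rsum_ext; intros; ring. }
    rewrite RInt_rsum.
    2: { intros k Hk. apply CE_rsum. intros i Hi x. apply cp_plus; apply cp_mult; try apply cp_const;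
         apply cp_mult; try apply leg_cont. apply cV. apply cGQ; auto. }
    transitivity (rsum m (fun k => rsum s (fun i => h * w i k * g i k + h * g i k * eta G h u i k))).
    { apply rsum_ext. intros k Hk. rewrite RInt_rsum.
      2: { intros i Hi x. apply cp_plus; apply cp_mult; try apply cp_const;
         apply cp_mult; try apply leg_cont. apply cV. apply cGQ; auto. }
      apply rsum_ext. intros i Hi.
      rewrite (RInt_lin 0 1 (fun x => legendre i x * Vt x k) (fun x => legendre i x * G (Qt x) k)).
      rewrite <- Ig, <- Ieta by auto. reflexivity.
      intro x; apply cp_mult; [apply leg_cont|apply cV].
      intro x; apply cp_mult; [apply leg_cont|apply cGQ; auto]. }
    transitivity (h * rsum m (fun k => rsum s (fun i => rsum s (fun j => rsum m (fun l =>
        g i k * rho B h u i j k l * g j l))))).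
    { rewrite rsum_mult_l. apply rsum_ext; intros k Hk. rewrite rsum_mult_l. apply rsum_ext; intros i Hi.
      assert (A: rsum s (fun j => rsum m (fun l => g i k * rho B h u i j k l * g j l)) =
                 g i k * rsum s (fun j => rsum m (fun l => rho B h u i j k l * g j l))).
      { rewrite rsum_mult_l. apply rsum_ext; intros. rewrite rsum_mult_l. apply rsum_ext; intros. ring. }
      rewrite A. unfold w. ring. }
    rewrite quad_anti. match goal with |- ?a = ?b => change (a = b :> R) end. ring.
    intros k i j l Hk Hi Hj Hl. rewrite skew by auto. ring. }
  assert (E1 : energy m U (u h) (v h) = E 1).
  { unfold energy, E.
    assert (Hu1 : forall k, (k<m)%nat -> u h k = Qt 1 k).
    { intros. rewrite <- (HuQ 1) by (auto; lra). rewrite Rmult_1_l. reflexivity. }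
    assert (Hv1 : forall k, (k<m)%nat -> v h k = Vt 1 k).
    { intros. rewrite <- (HvV 1) by (auto; lra). rewrite Rmult_1_l. reflexivity. }
    f_equal. f_equal. apply rsum_ext; intros. rewrite Hv1 by auto. reflexivity.
    apply HU. auto. }
  assert (E0 : energy m U q0 p0 = E 0).
  { unfold energy, E.
    assert (Z0 : forall cf : nat -> R, rsum s (fun i => RInt (legendre i) 0 0 * cf i) = 0).
    { intros cf. rewrite <- (rsum_zero s). apply rsum_ext. intros. rewrite RInt_point. unfold zero; simpl. ring. }
    assert (Q0 : forall k, Qt 0 k = q0 k). { intros. unfold Qt. rewrite Z0. ring. }
    assert (V0 : forall k, Vt 0 k = p0 k). { intros. unfold Vt. rewrite Z0. ring. }
    f_equal. f_equal. apply rsum_ext; intros. rewrite V0. reflexivity.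
    apply HU. intros; rewrite Q0; auto. }
  rewrite E1, E0. apply Rminus_diag_uniq. rewrite <- FTC. exact Z.
Qed.
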